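(* Let $\mathcal{X},\mathcal{Y}$ be families of metric spaces and $\alpha,\beta$ ordinals. (1) If $\mathcal{X}\in\mathfrak{C}_\beta$ and $\beta<\alpha$, then $\mathcal{X}\in\mathfrak{C}_\alpha$. (2) If $\mathcal{X},\mathcal{Y}\in\mathfrak{C}_\alpha$, then $\mathcal{X}\cup\mathcal{Y}\in\mathfrak{C}_\alpha$. (3) If $\mathcal{X}\prec\mathcal{Y}$ and $\mathcal{Y}\in\mathfrak{C}_\alpha$, then $\mathcal{X}\in\mathfrak{C}_\alpha$.
   Context: A family $\mathcal{U}$ of metric subspaces of a metric space $(X,d)$ is $r$-disjoint if $d(x,y)>r$ whenever $x\in U$, $y\in U'$, $U\neq U'$ in $\mathcal{U}$. For families $\mathcal{X},\mathcal{Y}$ and $R\in\mathbb{R}^{\mathbb{N}}$, $\mathcal{X}\xrightarrow{R}\mathcal{Y}$ means: there is an integer $k$ such that for each $X\in\mathcal{X}$ there are subcollections $\mathcal{U}_1,\dots,\mathcal{U}_k\subseteq\mathcal{Y}$ of subspaces of $X$, each $\mathcal{U}_i$ being $R_i$-disjoint, with $\bigcup_i\mathcal{U}_i$ covering $X$. A family is bounded if the diameters of its members are uniformly bounded. $\mathfrak{C}_0$ is the class of bounded families; for an ordinal $\alpha>0$, $\mathfrak{C}_\alpha$ is the class of families $\mathcal{X}$ such that for every $R\in\mathbb{R}^{\mathbb{N}}$ there exist $\beta<\alpha$ and $\mathcal{Y}\in\mathfrak{C}_\beta$ with $\mathcal{X}\xrightarrow{R}\mathcal{Y}$. $\mathcal{X}\prec\mathcal{Y}$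 means that every $X\in\mathcal{X}$ is a (metric) subspace of some $Y\in\mathcal{Y}$. *)

(* Defs.v *)
From Stdlib Require Import Reals.
Open Scope R_scope.

(* A metric space is represented as a carrier subset of an ambient type T
   together with a distance function on T.  The distance is normalized to be
   0 outside carrier x carrier, so each metric space has a unique representation. *)
Definition mspace (T : Type) : Type := ((T -> Prop) * (T -> T -> R))%type.

Definition carrier {T : Type} (M : mspace T) : T -> Prop := fst M.
Definition dist {T : Type} (M : mspace T) : T -> T -> R := snd M.

Definition is_metric {T : Type} (M : mspace T) : Prop :=
  (forall x y, carrier M x -> carrier M y -> 0 <= dist M x y) /\
  (forall x y, carrier M x -> carrier M y -> (dist M x y = 0 <-> x = y)) /\
  (forall x y, carrier M x -> carrier M y -> dist M x y = dist M y x) /\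
  (forall x y z, carrier M x -> carrier M y -> carrier M z ->
     dist M x z <= dist M x y + dist M y z) /\
  (forall x y, ~ (carrier M x /\ carrier M y) -> dist M x y = 0).

Definition mfam (T : Type) : Type := mspace T -> Prop.

Definition mfamily {T : Type} (F : mfam T) : Prop :=
  forall M, F M -> is_metric M.

Definition subspace {T : Type} (U X : mspace T) : Prop :=
  (forall x, carrier U x -> carrier X x) /\
  (forall x y, carrier U x -> carrier U y -> dist U x y = dist X x y).

Definition r_disjoint {T : Type} (d : T -> T -> R) (U : mfam T) (r : R) : Prop :=
  forall U1 U2, U U1 -> U U2 -> U1 <> U2 ->
    forall x y, carrier U1 x -> carrier U2 y -> d x y > r.

Definition arrow {T : Type} (Rs : nat -> R) (XX YY : mfam T) : Prop :=
  exists k : nat, forall X, XX X ->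
    exists U : nat -> mfam T,
      (forall i, (1 <= i <= k)%nat ->
         (forall V, U i V -> YY V /\ subspace V X) /\
         r_disjoint (dist X) (U i) (Rs i)) /\
      (forall x, carrier X x ->
         exists i, (1 <= i <= k)%nat /\ exists V, U i V /\ carrier V x).

Definition bounded {T : Type} (F : mfam T) : Prop :=
  exists D : R, forall M, F M ->
    forall x y, carrier M x -> carrier M y -> dist M x y <= D.

(* Ordinals are modelled by an arbitrary strict well-order (O, lt). *)
Definition wellorder {O : Type} (lt : O -> O -> Prop) : Prop :=
  well_founded lt /\
  (forall a b c, lt a b -> lt b c -> lt a c) /\
  (forall a b, lt a b \/ a = b \/ lt b a).

Definition is_zero {O : Type} (lt : O -> O -> Prop) (a : O) : Prop :=
  forall b, ~ lt b a.

(* Cls lt a F  <->  F belongs to the class \mathfrak{C}_a. *)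
Inductive Cls {T O : Type} (lt : O -> O -> Prop) : O -> mfam T -> Prop :=
| Cls_zero : forall a (F : mfam T),
    is_zero lt a -> mfamily F -> bounded F -> Cls lt a F
| Cls_succ : forall a (F : mfam T),
    ~ is_zero lt a -> mfamily F ->
    (forall Rs : nat -> R, exists b, lt b a /\
        exists G : mfam T, Cls lt b G /\ arrow Rs F G) ->
    Cls lt a F.

Definition funion {T : Type} (F G : mfam T) : mfam T :=
  fun M => F M \/ G M.

Definition prec {T : Type} (F G : mfam T) : Prop :=
  forall X, F X -> exists Y, G Y /\ subspace X Y.

(* Main.v *)
Require Import Defs.
From Stdlib Require Import Reals.
From Stdlib Require Import ClassicalEpsilon Lra Lia.

Lemma Cls_mfamily {T O : Type} (lt : O -> O -> Prop) a (F : mfam T) :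
  Cls lt a F -> mfamily F.
Proof. intros H; inversion H; auto. Qed.

Lemma part1 {T O : Type} (lt : O -> O -> Prop) (XX : mfam T) a b :
  Cls lt b XX -> lt b a -> Cls lt a XX.
Proof.
  intros H Hba. apply Cls_succ.
  - intros Hz. exact (Hz b Hba).
  - exact (Cls_mfamily _ _ _ H).
  - intros Rs. exists b. split; [exact Hba|]. exists XX. split; [exact H|].
    exists 1%nat. intros X HXX. exists (fun _ V => V = X). split.
    + intros i Hi. split.
      * intros V ->. split; [exact HXX|]. split; auto.
      * intros U1 U2 -> -> Hne. congruence.
    + intros x Hx. exists 1%nat. split; [lia|]. exists X. auto.
Qed.

Lemma mfamily_union {T} (F G : mfam T) : mfamily F -> mfamily G -> mfamily (funion F G).
Proof. intros HF HG M [H|H]; auto. Qed.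

Lemma arrow_union {T} Rs (F1 F2 G1 G2 : mfam T) :
  arrow Rs F1 G1 -> arrow Rs F2 G2 -> arrow Rs (funion F1 F2) (funion G1 G2).
Proof.
  intros [k1 H1] [k2 H2]. exists (Nat.max k1 k2).
  intros X [HXX|HXX].
  - destruct (H1 X HXX) as [U [HU Hc]].
    exists (fun i V => (i <= k1)%nat /\ U i V). split.
    + intros i Hi. split.
      * intros V [Hik HV]. destruct (HU i ltac:(lia)) as [HU1 _].
        destruct (HU1 V HV). split; [left|]; auto.
      * intros U1 U2 [Hik HU1] [_ HU2] Hne.
        destruct (HU i ltac:(lia)) as [_ Hd]. apply Hd; auto.
    + intros x Hx. destruct (Hc x Hx) as [i [Hi [V [HV HxV]]]].
      exists i. split; [lia|]. exists V. split; [split; [lia|]|]; auto.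
  - destruct (H2 X HXX) as [U [HU Hc]].
    exists (fun i V => (i <= k2)%nat /\ U i V). split.
    + intros i Hi. split.
      * intros V [Hik HV]. destruct (HU i ltac:(lia)) as [HU1 _].
        destruct (HU1 V HV). split; [right|]; auto.
      * intros U1 U2 [Hik HU1] [_ HU2] Hne.
        destruct (HU i ltac:(lia)) as [_ Hd]. apply Hd; auto.
    + intros x Hx. destruct (Hc x Hx) as [i [Hi [V [HV HxV]]]].
      exists i. split; [lia|]. exists V. split; [split; [lia|]|]; auto.
Qed.

Lemma part2 {T O : Type} (lt : O -> O -> Prop) (Hwo : wellorder lt) :
  forall a (F G : mfam T), Cls lt a F -> Cls lt a G -> Cls lt a (funion F G).
Proof.
  destruct Hwo as [Hwf [Htr Htot]].
  intros a. induction a as [a IH] using (well_founded_ind Hwf).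
  intros F G HF HG.
  inversion HF as [a0 F0 Hz HmF HbF | a0 F0 Hnz HmF HsF]; subst.
  - inversion HG as [a1 G0 _ HmG HbG | a1 G0 Hnz _ _]; subst; [|contradiction].
    apply Cls_zero; auto. apply mfamily_union; auto.
    destruct HbF as [D1 H1], HbG as [D2 H2]. exists (Rmax D1 D2).
    intros M [HM|HM] x y Hx Hy.
    + eapply Rle_trans; [apply H1; eauto| apply Rmax_l].
    + eapply Rle_trans; [apply H2; eauto| apply Rmax_r].
  - inversion HG as [a1 G0 Hz _ _ | a1 G0 _ HmG HsG]; subst; [contradiction|].
    apply Cls_succ; auto. apply mfamily_union; auto.
    intros Rs. destruct (HsF Rs) as [b1 [Hb1 [G1 [HG1 HA1]]]].
    destruct (HsG Rs) as [b2 [Hb2 [G2 [HG2 HA2]]]].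
    destruct (Htot b1 b2) as [Hl|[He|Hl]].
    + exists b2. split; auto. exists (funion G1 G2). split.
      * apply IH; auto. eapply part1; eauto.
      * apply arrow_union; auto.
    + subst. exists b2. split; auto. exists (funion G1 G2). split.
      * apply IH; auto.
      * apply arrow_union; auto.
    + exists b1. split; auto. exists (funion G1 G2). split.
      * apply IH; auto. eapply part1; eauto.
      * apply arrow_union; auto.
Qed.

Definition restrict {T} (V X : mspace T) : mspace T :=
  (fun x => carrier V x /\ carrier X x,
   fun x y => if excluded_middle_informative
                 ((carrier V x /\ carrier X x) /\ (carrier V y /\ carrier X y))
              then Defs.dist V x y else 0).

Lemma restrict_dist {T} (V X : mspace T) x y :
  carrier (restrict V X) x -> carrier (restrict V X) y ->
  Defs.dist (restrict V X) x y = Defs.dist V x y.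
Proof.
  intros Hx Hy. unfold Defs.dist at 1, restrict; simpl.
  destruct excluded_middle_informative as [_|n]; [reflexivity|].
  exfalso; apply n; split; assumption.
Qed.

Lemma restrict_metric {T} (V X : mspace T) : is_metric V -> is_metric (restrict V X).
Proof.
  intros [m1 [m2 [m3 [m4 m5]]]].
  repeat split.
  - intros x y Hx Hy. rewrite restrict_dist; auto. apply m1; [apply Hx|apply Hy].
  - intros Hd. rewrite restrict_dist in Hd; auto. apply m2 in Hd; auto;
      [apply H|apply H0].
  - intros ->. rewrite restrict_dist; auto. apply m2; [apply H0|apply H0|reflexivity].
  - intros x y Hx Hy. rewrite !restrict_dist; auto. apply m3; [apply Hx|apply Hy].
  - intros x y z Hx Hy Hz. rewrite !restrict_dist; auto.
    apply m4; [apply Hx|apply Hy|apply Hz].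
  - intros x y Hn. unfold Defs.dist, restrict; simpl.
    destruct excluded_middle_informative as [a|_]; [|reflexivity].
    exfalso; apply Hn; exact a.
Qed.

Lemma part3 {T O : Type} (lt : O -> O -> Prop) (Hwo : wellorder lt) :
  forall a (YY XX : mfam T), mfamily XX -> prec XX YY -> Cls lt a YY -> Cls lt a XX.
Proof.
  destruct Hwo as [Hwf [Htr Htot]].
  intros a. induction a as [a IH] using (well_founded_ind Hwf).
  intros YY XX HmX Hp HY.
  inversion HY as [a0 Y0 Hz HmY HbY | a0 Y0 Hnz HmY HsY]; subst.
  - apply Cls_zero; auto. destruct HbY as [D HD]. exists D.
    intros M HM x y Hx Hy. destruct (Hp M HM) as [Y [HYY [Hs1 Hs2]]].
    rewrite Hs2; auto.
  - apply Cls_succ; auto. intros Rs.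
    destruct (HsY Rs) as [b [Hb [G [HG [k HA]]]]].
    pose proof (Cls_mfamily _ _ _ HG) as HmG.
    set (H := fun W : mspace T => is_metric W /\ exists V, G V /\ subspace W V).
    exists b. split; auto. exists H. split.
    + apply (IH b Hb G H); auto.
      * intros W [HW _]; exact HW.
      * intros W [_ HW]; exact HW.
    + exists k. intros X HXX. destruct (Hp X HXX) as [Y [HYY [HXY1 HXY2]]].
      destruct (HA Y HYY) as [U [HU Hc]].
      exists (fun i W => exists V, U i V /\ W = restrict V X). split.
      * intros i Hi. destruct (HU i Hi) as [HU1 HU2]. split.
        -- intros W [V [HV ->]]. destruct (HU1 V HV) as [HGV [HVY1 HVY2]].
           split; [split|].
           ++ apply restrict_metric; auto.
           ++ exists V. split; auto. split.
              ** intros x Hx; apply Hx.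
              ** intros x y Hx Hy; apply restrict_dist; auto.
           ++ split.
              ** intros x Hx; apply Hx.
              ** intros x y Hx Hy. rewrite restrict_dist; auto.
                 rewrite HVY2 by (apply Hx || apply Hy).
                 rewrite HXY2 by (apply Hx || apply Hy). reflexivity.
        -- intros W1 W2 [V1 [HV1 ->]] [V2 [HV2 ->]] Hne x y Hx Hy.
           rewrite HXY2 by (apply Hx || apply Hy).
           apply (HU2 V1 V2); auto.
           ++ intros ->; apply Hne; reflexivity.
           ++ apply Hx.
           ++ apply Hy.
      * intros x Hx. destruct (Hc x (HXY1 x Hx)) as [i [Hi [V [HV HxV]]]].
        exists i. split; auto. exists (restrict V X). split.
        -- exists V; auto.
        -- split; auto.
Qed.

Theorem lemma3p3 (T O : Type) (lt : O -> O -> Prop) (Hwo : wellorder lt)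
  (XX YY : mfam T) (a b : O) (HX : mfamily XX) (HY : mfamily YY) :
  (Cls lt b XX -> lt b a -> Cls lt a XX) /\
  (Cls lt a XX -> Cls lt a YY -> Cls lt a (funion XX YY)) /\
  (prec XX YY -> Cls lt a YY -> Cls lt a XX).
Proof.
  split; [apply part1|split].
  - apply part2; auto.
  - intros Hp HC. eapply part3; eauto.
Qed.
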